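(* Let $P$ be a poset. If $P$ is well-quasi-ordered and the set $\mathcal{J}^{\neg\downarrow}(P)$ of non-principal ideals of $P$ is finite, then $P$ is better-quasi-ordered.
   Context: An ideal of $P$ is a nonempty initial segment of $P$ which is up-directed (any two elements have an upper bound in it); it is principal if it has a largest element. A quasi-ordered set is well-quasi-ordered (wqo) if it is well-founded and has no infinite antichain. Barriers and bqo: finite subsets of $\mathbb{N}$ are identified with their increasing enumerations. For finite $s,t\subseteq\mathbb{N}$ write $s\triangleleft t$ if there is a finite $r\subseteq\mathbb{N}$ such that $s$ is a proper initial segment of $r$ and $t$ is $r$ with its least element removed. A barrier is an infinite set $B$ of finite subsets of $\mathbb{N}$, no member of which is a proper subset of another, such that every infinite $X\subseteq\bigcup B$ has a nonempty initial segment belonging to $B$. A barrier is well-ordered by the lexicographic order; its order type is the type of this well-order. A map $f$ from a barrier $B$ into a quasi-ordered set $Q$ is good if there exist $s,t\in B$ with $s\triangleleft t$ and $f(s)\leq f(t)$, and bad otherwise. For a countable ordinal $\alpha$, $Q$ is $\alpha$-bqo if every map from a barrier of order type at most $\alpha$ into $Q$ is good; $Q$ is better-quasi-ordered (bqo) if it is $\alpha$-bqo for every countable ordinal $\alpha$. *)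

(* Defs.v *)
From Stdlib Require Import List Arith Sorting.Sorted Relations Wellfounded.
Import ListNotations.

Section Orders.
Variable T : Type.
Variable le : T -> T -> Prop.

Definition is_poset : Prop :=
  (forall x, le x x) /\
  (forall x y z, le x y -> le y z -> le x z) /\
  (forall x y, le x y -> le y x -> x = y).

Definition strict (x y : T) : Prop := le x y /\ ~ le y x.

Definition wqo : Prop :=
  well_founded strict /\
  ~ (exists f : nat -> T, forall i j, i <> j -> ~ le (f i) (f j)).

Definition ideal (I : T -> Prop) : Prop :=
  (exists x, I x) /\
  (forall x y, le x y -> I y -> I x) /\
  (forall x y, I x -> I y -> exists z, I z /\ le x z /\ le y z).

Definition principal (I : T -> Prop) : Prop :=
  exists m, I m /\ forall x, I x -> le x m.

Definition finitely_many_nonprincipal_ideals : Prop :=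
  exists l : list (T -> Prop),
    forall I, ideal I -> ~ principal I ->
      exists J, In J l /\ forall x, I x <-> J x.
End Orders.

(** Finite subsets of N are identified with their increasing enumerations. *)
Definition fin_subset (s : list nat) : Prop := Sorted lt s.

Definition proper_prefix (s r : list nat) : Prop :=
  exists u, u <> [] /\ r = s ++ u.

Definition shift_rel (s t : list nat) : Prop :=
  exists r, fin_subset r /\ proper_prefix s r /\ t = tl r.

Definition initial_segment_of (s : list nat) (X : nat -> Prop) : Prop :=
  s <> [] /\ fin_subset s /\ (forall n, In n s -> X n) /\
  (forall n m, In m s -> X n -> n <= m -> In n s).

Definition infinite_nat_set (X : nat -> Prop) : Prop :=
  forall n, exists m, n <= m /\ X m.

Definition barrier (B : list nat -> Prop) : Prop :=
  (forall s, B s -> fin_subset s) /\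
  (~ exists l : list (list nat), forall s, B s -> In s l) /\
  (forall s t, B s -> B t -> incl s t -> s = t) /\
  (forall X : nat -> Prop, infinite_nat_set X ->
     (forall n, X n -> exists s, B s /\ In n s) ->
     exists s, B s /\ initial_segment_of s X).

Fixpoint lex_lt (s t : list nat) : Prop :=
  match s, t with
  | [], [] => False
  | [], _ :: _ => True
  | _ :: _, [] => False
  | a :: s', b :: t' => a < b \/ (a = b /\ lex_lt s' t')
  end.

(** A countable ordinal, presented as a countable strict well-order (A, ltA). *)
Definition countable_ordinal (A : Type) (ltA : A -> A -> Prop) : Prop :=
  (forall x, ~ ltA x x) /\
  (forall x y z, ltA x y -> ltA y z -> ltA x z) /\
  (forall x y, ltA x y \/ x = y \/ ltA y x) /\
  well_founded ltA /\
  (exists enc : A -> nat, forall x y, enc x = enc y -> x = y).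

(** The order type of the barrier B (lexicographic order) is at most that of
    the well-order (A, ltA): there is a strictly increasing map B -> A. *)
Definition barrier_type_le (B : list nat -> Prop) (A : Type) (ltA : A -> A -> Prop) : Prop :=
  exists g : list nat -> A, forall s t, B s -> B t -> lex_lt s t -> ltA (g s) (g t).

Definition good_map {Q : Type} (leQ : Q -> Q -> Prop) (B : list nat -> Prop)
    (f : list nat -> Q) : Prop :=
  exists s t, B s /\ B t /\ shift_rel s t /\ leQ (f s) (f t).

Definition alpha_bqo {Q : Type} (leQ : Q -> Q -> Prop) (A : Type) (ltA : A -> A -> Prop) : Prop :=
  forall B : list nat -> Prop, barrier B -> barrier_type_le B A ltA ->
  forall f : list nat -> Q, good_map leQ B f.

Definition bqo {Q : Type} (leQ : Q -> Q -> Prop) : Prop :=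
  forall (A : Type) (ltA : A -> A -> Prop), countable_ordinal A ltA -> alpha_bqo leQ A ltA.

(* Main.v *)
Require Import Defs.
From Stdlib Require Import List Arith Lia Sorting.Sorted Relations Wellfounded Classical IndefiniteDescription.
Import ListNotations.


Definition sinc (g : nat -> nat) := forall i, g i < g (S i).
Definition sub (N M : nat -> nat) := forall i, exists j, N i = M j.
Definition pre (g : nat -> nat) k := map g (seq 0 k).
Definition shift k (g : nat -> nat) := fun i => g (k + i).

Lemma sinc_lt g : sinc g -> forall i j, i < j -> g i < g j.
Proof. intros H i j Hij. induction Hij. apply H. specialize (H m). lia. Qed.
Lemma sinc_le g : sinc g -> forall i j, i <= j -> g i <= g j.
Proof. intros H i j Hij. destruct (Nat.eq_dec i j). subst; lia. pose proof (sinc_lt g H i j). lia. Qed.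
Lemma sinc_lt_inv g : sinc g -> forall i j, g i < g j -> i < j.
Proof. intros H i j Hij. destruct (le_lt_dec j i); [|lia]. pose proof (sinc_le g H j i l). lia. Qed.
Lemma sinc_ge g : sinc g -> forall i, i <= g i.
Proof. intros H i; induction i; [lia|]. specialize (H i); lia. Qed.
Lemma sub_refl M : sub M M.
Proof. intro i; exists i; auto. Qed.
Lemma sub_trans A B C : sub A B -> sub B C -> sub A C.
Proof. intros H1 H2 i. destruct (H1 i) as [j Hj]. destruct (H2 j) as [k Hk]. exists k; congruence. Qed.
Lemma sub_shift k M : sub (shift k M) M.
Proof. intro i; exists (k+i); reflexivity. Qed.
Lemma sinc_shift k M : sinc M -> sinc (shift k M).
Proof. intros H i; unfold shift. rewrite <- plus_n_Sm. apply H. Qed.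
Lemma map_shift k V a n : map (shift k V) (seq a n) = map V (seq (k + a) n).
Proof. revert a; induction n; intros a; simpl; auto. f_equal. rewrite IHn. f_equal. f_equal. lia. Qed.
Lemma pre_shift k V n : pre (shift k V) n = map V (seq k n).
Proof. unfold pre; rewrite map_shift; f_equal; f_equal; lia. Qed.
Lemma pre_S V k : pre V (S k) = V 0 :: pre (shift 1 V) k.
Proof. unfold pre. simpl. rewrite map_shift. reflexivity. Qed.
Lemma pre_shift_shift j V n : pre (shift 1 (shift j V)) n = pre (shift (S j) V) n.
Proof. rewrite pre_shift, map_shift, pre_shift. f_equal. f_equal. lia. Qed.
Lemma pre_length V k : length (pre V k) = k.
Proof. unfold pre; rewrite length_map, length_seq; auto. Qed.
Lemma sorted_seq g : sinc g -> forall a n, Sorted lt (map g (seq a n)).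
Proof. intros H a n; revert a; induction n; intros a; simpl; constructor; auto.
  destruct n; simpl; constructor. apply H. Qed.
Lemma sorted_pre g k : sinc g -> Sorted lt (pre g k).
Proof. intros; apply sorted_seq; auto. Qed.

Lemma subseq_choice (P : nat -> Prop) : (forall i, exists j, i <= j /\ P j) ->
  exists s : nat -> nat, sinc s /\ forall k, P (s k).
Proof.
  intros H.
  set (c := fun i => proj1_sig (constructive_indefinite_description _ (H i))).
  assert (Hc : forall i, i <= c i /\ P (c i)).
  { intro i; unfold c; destruct (constructive_indefinite_description _ (H i)); auto. }
  exists (fix s k := match k with 0 => c 0 | S k => c (S (s k)) end).
  split.
  - intro k. simpl. destruct (Hc (S ((fix s (k0 : nat) : nat := match k0 with | 0 => c 0 | S k1 => c (S (s k1)) end) k))). lia.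
  - intro k; destruct k; simpl; apply Hc.
Qed.

Lemma not_acc_chain {A} (R : A -> A -> Prop) x : ~ Acc R x ->
  exists s : nat -> A, s 0 = x /\ forall i, R (s (S i)) (s i) /\ ~ Acc R (s i).
Proof.
  intros Hx.
  assert (H : forall y, exists z, ~ Acc R y -> R z y /\ ~ Acc R z).
  { intro y. destruct (classic (exists z, R z y /\ ~ Acc R z)) as [[z Hz]|Hn].
    - exists z; auto.
    - exists y. intro Hy. exfalso. apply Hy. constructor. intros z Hz.
      apply NNPP. intro. apply Hn. eauto. }
  set (F := fun y => proj1_sig (constructive_indefinite_description _ (H y))).
  assert (HF : forall y, ~ Acc R y -> R (F y) y /\ ~ Acc R (F y)).
  { intro y; unfold F; destruct (constructive_indefinite_description _ (H y)); auto. }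
  exists (fun i => Nat.iter i F x). split; [reflexivity|].
  assert (Hn : forall i, ~ Acc R (Nat.iter i F x)).
  { induction i; simpl; auto. apply HF; auto. }
  intro i; split; [simpl; apply HF; auto | auto].
Qed.


Lemma ss_of (l : list nat) : Sorted lt l -> StronglySorted lt l.
Proof. apply Sorted_StronglySorted. intros x y z; lia. Qed.

Lemma sorted_eq (l1 l2 : list nat) : Sorted lt l1 -> Sorted lt l2 ->
  (forall x, In x l1 <-> In x l2) -> l1 = l2.
Proof.
  intros H1 H2. apply ss_of in H1. apply ss_of in H2. revert l2 H2.
  induction H1 as [|a l1 H1 IH Ha]; intros l2 H2 Hx; destruct H2 as [|b l2 H2 Hb].
  - auto.
  - exfalso. apply (Hx b). left; auto.
  - exfalso. apply (Hx a). left; auto.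
  - assert (a = b).
    { assert (A1 : In a (b :: l2)) by (apply Hx; left; auto).
      assert (A2 : In b (a :: l1)) by (apply Hx; left; auto).
      destruct A1 as [A1|A1]; auto. destruct A2 as [A2|A2]; auto.
      rewrite Forall_forall in Ha, Hb. specialize (Ha _ A2). specialize (Hb _ A1). lia. }
    subst. f_equal. apply IH; auto. intro x. split; intro Hin.
    + assert (In x (b :: l2)) by (apply Hx; right; auto). destruct H; auto.
      subst. rewrite Forall_forall in Ha. specialize (Ha _ Hin). lia.
    + assert (In x (b :: l1)) by (apply Hx; right; auto). destruct H; auto.
      subst. rewrite Forall_forall in Hb. specialize (Hb _ Hin). lia.
Qed.

Lemma list_max_ex (s : list nat) : s <> [] -> exists m, In m s /\ forall x, In x s -> x <= m.
Proof.
  induction s as [|a s IH]; intros H; [congruence|].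
  destruct s as [|b s].
  - exists a. split; [left; auto|]. intros x [Hx|[]]; lia.
  - destruct IH as [m [Hm1 Hm2]]; [congruence|].
    destruct (le_lt_dec a m).
    + exists m. split; [right; auto|]. intros x [Hx|Hx]; [lia|auto].
    + exists a. split; [left; auto|]. intros x [Hx|Hx]; [lia|]. specialize (Hm2 x Hx); lia.
Qed.

Lemma in_pre g k x : In x (pre g k) <-> exists i, i < k /\ x = g i.
Proof. unfold pre. rewrite in_map_iff. split.
  - intros [i [H1 H2]]. apply in_seq in H2. exists i; split; [lia|auto].
  - intros [i [H1 H2]]. exists i; split; auto. apply in_seq; lia. Qed.

Section Bar.
Variable B : list nat -> Prop.
Hypothesis HB : barrier B.

Definition U x := exists s, B s /\ In x s.
Definition inU (g : nat -> nat) := forall i, U (g i).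

Lemma anti s t : B s -> B t -> incl s t -> s = t.
Proof. destruct HB as [_ [_ [H _]]]. apply H. Qed.

Lemma inU_sub N M : inU M -> sub N M -> inU N.
Proof. intros H1 H2 i. destruct (H2 i) as [j ->]. apply H1. Qed.

Lemma key g : sinc g -> inU g -> exists k, B (pre g k).
Proof.
  intros Hg HU. destruct HB as [_ [_ [_ Hbar]]].
  destruct (Hbar (fun n => exists i, g i = n)) as [s [Bs [Hne [Hsort [HinX Hdown]]]]].
  - intro n. exists (g n). split; [apply sinc_ge; auto| eauto].
  - intros n [i <-]. apply HU.
  - destruct (list_max_ex s Hne) as [m [Hm1 Hm2]].
    destruct (HinX m Hm1) as [K HK].
    exists (S K). replace (pre g (S K)) with s; auto.
    apply sorted_eq; auto. apply sorted_pre; auto.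
    intro x. rewrite in_pre. split.
    + intro Hx. destruct (HinX x Hx) as [i Hi]. exists i. split; auto.
      specialize (Hm2 x Hx). subst.
      destruct (le_lt_dec i K); [lia|]. pose proof (sinc_lt g Hg K i l). lia.
    + intros [i [Hi ->]]. apply (Hdown _ m); eauto. subst. apply sinc_le; auto; lia.
Qed.

Lemma incl_pre g a b : a <= b -> incl (pre g a) (pre g b).
Proof. intros H x. rewrite !in_pre. intros [i [Hi ->]]. exists i; split; auto; lia. Qed.

Lemma uniq_pre g a b : B (pre g a) -> B (pre g b) -> a = b.
Proof.
  intros Ha Hb. destruct (le_lt_dec a b).
  - pose proof (anti _ _ Ha Hb (incl_pre g a b l)). rewrite <- (pre_length g a), <- (pre_length g b). congruence.
  - assert (b <= a) by lia.
    pose proof (anti _ _ Hb Ha (incl_pre g b a H)). rewrite <- (pre_length g a), <- (pre_length g b). congruence.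
Qed.

Lemma step_rel V a b : sinc V -> B (pre V a) -> B (pre (shift 1 V) b) ->
  shift_rel (pre V a) (pre (shift 1 V) b).
Proof.
  intros HV Ha Hb.
  assert (Hab : a <= b).
  { destruct (le_lt_dec a b); auto. exfalso.
    assert (incl (pre (shift 1 V) b) (pre V a)).
    { intros x. rewrite !in_pre. intros [i [Hi ->]]. exists (1 + i). split; [lia|reflexivity]. }
    pose proof (anti _ _ Hb Ha H). apply (f_equal (@length nat)) in H0.
    rewrite !pre_length in H0. lia. }
  exists (pre V (S b)). split; [apply sorted_pre; auto|]. split.
  - exists (map V (seq a (S b - a))). split.
    + destruct (S b - a) eqn:E; [lia|]. simpl. congruence.
    + unfold pre. rewrite <- map_app. f_equal.
      replace (S b) with (a + (S b - a)) at 1 by lia. rewrite seq_app. reflexivity.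
  - rewrite pre_S. reflexivity.
Qed.

Definition BZ (Z : nat -> nat) s := exists W k, sinc W /\ sub W Z /\ s = pre W k.

Lemma BZ_sub Z Z' s : sub Z' Z -> BZ Z' s -> BZ Z s.
Proof. intros H [W [k [H1 [H2 H3]]]]. exists W, k. repeat split; auto. eapply sub_trans; eauto. Qed.

Lemma pair_ex Z : sinc Z -> inU Z -> exists s t, B s /\ B t /\ BZ Z s /\ BZ Z t /\ shift_rel s t.
Proof.
  intros HZ HU. destruct (key Z HZ HU) as [a Ha].
  destruct (key (shift 1 Z) (sinc_shift 1 Z HZ) (inU_sub _ _ HU (sub_shift 1 Z))) as [b Hb].
  exists (pre Z a), (pre (shift 1 Z) b). repeat split; auto.
  - exists Z, a. repeat split; auto. apply sub_refl.
  - exists (shift 1 Z), b. repeat split; auto. apply sinc_shift; auto. apply sub_shift.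
  - apply step_rel; auto.
Qed.

End Bar.


Section NW.
Variable B : list nat -> Prop.
Hypothesis HB : barrier B.
Variable C : list nat -> Prop.

Definition term p := exists q r, B q /\ p = q ++ r.
Definition child p' p := exists n, p' = p ++ [n] /\ U B n /\ (forall x, In x p -> x < n) /\ ~ term p.
Definition col (b : bool) s := if b then C s else ~ C s.
Definition Hom b p N := forall W k, sinc W -> sub W N -> B (p ++ pre W k) -> col b (p ++ pre W k).
Definition Claim p := forall M, sinc M -> inU B M -> (forall x, In x p -> x < M 0) ->
  exists N b, sinc N /\ sub N M /\ Hom b p N.

Lemma acc_root : Acc child [].
Proof.
  apply NNPP. intro Hn. destruct (not_acc_chain child [] Hn) as [s [Hs0 Hs]].
  assert (Hc : forall i, exists n, s (S i) = s i ++ [n] /\ U B n /\ (forall x, In x (s i) -> x < n) /\ ~ term (s i)).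
  { intro i. destruct (Hs i) as [[n Hn'] _]. exists n; auto. }
  set (g := fun i => nth i (s (S i)) 0).
  assert (Hpre : forall i, s i = pre g i).
  { induction i. rewrite Hs0; reflexivity.
    destruct (Hc i) as [n [E _]]. rewrite E, IHi. unfold pre. rewrite seq_S, map_app. simpl.
    f_equal. f_equal. unfold g. rewrite E, IHi. rewrite app_nth2; rewrite pre_length; auto.
    rewrite Nat.sub_diag. reflexivity. }
  assert (Hg : forall i, exists n, g i = n /\ s (S i) = s i ++ [n] /\ U B n /\ (forall x, In x (s i) -> x < n) /\ ~ term (s i)).
  { intro i. destruct (Hc i) as [n [E H]]. exists n. split; auto. unfold g. rewrite E.
    rewrite app_nth2; rewrite Hpre, pre_length; auto. rewrite Nat.sub_diag. reflexivity. }
  assert (sinc g).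
  { intro i. destruct (Hg (S i)) as [n [E [_ [_ [Hlt _]]]]]. rewrite E. apply Hlt.
    rewrite Hpre. apply in_pre. exists i; split; auto. }
  assert (inU B g).
  { intro i. destruct (Hg i) as [n [E [_ [HU _]]]]. rewrite E; auto. }
  destruct (key B HB g H H0) as [k Hk].
  destruct (Hg k) as [n [_ [_ [_ [_ Ht]]]]]. apply Ht. exists (s k), []. rewrite app_nil_r. rewrite Hpre. auto.
Qed.

Lemma pigeon (c : nat -> bool) : exists s b, sinc s /\ forall k, c (s k) = b.
Proof.
  destruct (classic (forall i, exists j, i <= j /\ c j = true)) as [H|H].
  - destruct (subseq_choice _ H) as [s [Hs1 Hs2]]. exists s, true; auto.
  - apply not_all_ex_not in H. destruct H as [i Hi].
    exists (fun k => i + k), false. split. intro k; lia.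
    intro k. destruct (c (i + k)) eqn:E; auto. exfalso. apply Hi. exists (i + k); split; auto; lia.
Qed.

Lemma claim_acc p : Acc child p -> Claim p.
Proof.
  induction 1 as [p _ IH].
  intros M HM HU Hp.
  destruct (classic (term p)) as [Ht|Ht].
  - destruct Ht as [q [r [Bq ->]]].
    destruct (classic (C q)) as [Cq|Cq]; [exists M, true|exists M, false]; split; auto; split; try apply sub_refl;
    intros W k _ _ Hs; rewrite <- app_assoc in *;
    (assert (E : q = q ++ r ++ pre W k) by (apply (anti B HB); auto; intros x Hx; apply in_or_app; auto));
    rewrite <- E; exact Cq.
  - set (Inv := fun X => sinc X /\ inU B X /\ forall x, In x p -> x < X 0).
    assert (HF : forall X, exists Y : (nat -> nat) * bool, Inv X ->
              sinc (fst Y) /\ sub (fst Y) (shift 1 X) /\ Hom (snd Y) (p ++ [X 0]) (fst Y)).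
    { intro X. destruct (classic (Inv X)) as [[H1 [H2 H3]]|H].
      - assert (Hch : child (p ++ [X 0]) p). { exists (X 0). repeat split; auto. }
        destruct (IH _ Hch (shift 1 X)) as [N [b [N1 [N2 N3]]]].
        + apply sinc_shift; auto.
        + eapply inU_sub; eauto. apply sub_shift.
        + intros x Hx. apply in_app_or in Hx. unfold shift. simpl. destruct Hx as [Hx|[Hx|[]]].
          * specialize (H3 x Hx). specialize (H1 0). lia.
          * subst. apply H1.
        + exists (N, b). intros _. auto.
      - exists (X, true). intro; contradiction. }
    set (F := fun X => proj1_sig (constructive_indefinite_description _ (HF X))).
    assert (HFs : forall X, Inv X -> sinc (fst (F X)) /\ sub (fst (F X)) (shift 1 X) /\ Hom (snd (F X)) (p ++ [X 0]) (fst (F X))).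
    { intros X HX. unfold F. destruct (constructive_indefinite_description _ (HF X)); simpl; auto. }
    set (Ms := fun i => Nat.iter i (fun X => fst (F X)) M).
    assert (HMsS : forall i, Ms (S i) = fst (F (Ms i))) by reflexivity.
    assert (Hinv : forall i, Inv (Ms i)).
    { induction i. split; auto.
      destruct (HFs _ IHi) as [H1 [H2 _]]. rewrite HMsS. destruct IHi as [I1 [I2 I3]].
      split; auto. split. eapply inU_sub; eauto. eapply sub_trans; eauto. apply sub_shift.
      intros x Hx. destruct (H2 0) as [j Hj]. rewrite Hj. unfold shift.
      specialize (I3 x Hx). pose proof (sinc_le _ I1 0 (1 + j)). lia. }
    assert (Hsub1 : forall i, sub (Ms (S i)) (shift 1 (Ms i))).
    { intro i. rewrite HMsS. apply HFs; auto. }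
    assert (Hhom : forall i, Hom (snd (F (Ms i))) (p ++ [Ms i 0]) (Ms (S i))).
    { intro i. rewrite HMsS. apply HFs; auto. }
    assert (Hsubd : forall d i, sub (Ms (d + i)) (Ms i)).
    { induction d; intro i. apply sub_refl. simpl. eapply sub_trans. apply Hsub1.
      eapply sub_trans. apply sub_shift. apply IHd. }
    set (n := fun i => Ms i 0).
    assert (Hn : sinc n).
    { intro i. unfold n. destruct (Hsub1 i 0) as [j Hj]. rewrite Hj. unfold shift.
      apply (sinc_lt _ (proj1 (Hinv i))). lia. }
    assert (Hnin : forall i j, i < j -> exists m, n j = Ms (S i) m).
    { intros i j Hij. unfold n. destruct (Hsubd (j - S i) (S i) 0) as [m Hm].
      exists m. rewrite <- Hm. f_equal. lia. }
    destruct (pigeon (fun i => snd (F (Ms i)))) as [sg [b [Hsg Hb]]].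
    exists (fun k => n (sg k)), b. split; [|split].
    + intro k. apply sinc_lt; auto.
    + intro k. unfold n. destruct (Hsubd (sg k) 0 0) as [m Hm]. exists m. replace (sg k) with (sg k + 0) by lia. exact Hm.
    + intros W k HW HWN HBk. destruct k as [|k].
      * exfalso. apply Ht. exists p, []. rewrite app_nil_r. split; auto. unfold pre in HBk; simpl in HBk; rewrite app_nil_r in HBk; auto.
      * rewrite pre_S in *. replace (p ++ W 0 :: pre (shift 1 W) k) with ((p ++ [W 0]) ++ pre (shift 1 W) k) in *
          by (rewrite <- app_assoc; reflexivity).
        destruct (HWN 0) as [a Ha]. cbv beta in Ha. rewrite Ha in *.
        specialize (Hhom (sg a) (shift 1 W) k). rewrite Hb in Hhom. apply Hhom; auto.
        apply sinc_shift; auto.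
        intro i. destruct (HWN (1 + i)) as [a' Ha']. cbv beta in Ha'. unfold shift. rewrite Ha'.
        apply Hnin. apply (sinc_lt_inv _ Hn).
        rewrite <- Ha', <- Ha. apply sinc_lt; auto; lia.
Qed.

Lemma NW1 Z : sinc Z -> inU B Z -> exists Z', sinc Z' /\ sub Z' Z /\
  ((forall s, B s -> BZ Z' s -> C s) \/ (forall s, B s -> BZ Z' s -> ~ C s)).
Proof.
  intros HZ HU. destruct (claim_acc [] acc_root Z HZ HU) as [N [b [H1 [H2 H3]]]].
  intros x []. exists N. split; auto. split; auto.
  destruct b; [left|right]; intros s Bs [W [k [HW [HWN ->]]]]; apply (H3 W k HW HWN Bs).
Qed.

End NW.


Section Ord.
Variable P : Type.
Variable le : P -> P -> Prop.
Hypothesis Hpo : is_poset P le.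
Hypothesis Hwqo : wqo P le.

Lemma le_refl x : le x x. Proof. apply Hpo. Qed.
Lemma le_trans x y z : le x y -> le y z -> le x z. Proof. apply Hpo. Qed.
Lemma le_anti x y : le x y -> le y x -> x = y. Proof. apply Hpo. Qed.

Definition downset (D : P -> Prop) := forall x y, le x y -> D y -> D x.
Definition dlt (D' D : P -> Prop) := downset D' /\ (forall x, D' x -> D x) /\ (exists x, D x /\ ~ D' x).

Lemma good_seq (x : nat -> P) : exists i j, i < j /\ le (x i) (x j).
Proof.
  apply NNPP. intro Hn.
  assert (H : forall i j, i < j -> ~ le (x i) (x j)). { intros i j Hij Hl. apply Hn. eauto. }
  destruct Hwqo as [Hwf Hac].
  set (T := fun i => forall j, i < j -> ~ strict P le (x j) (x i)).
  destruct (classic (forall i, exists j, i <= j /\ T j)) as [HT|HT].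
  - destruct (subseq_choice _ HT) as [sg [Hsg Hsg2]].
    apply Hac. exists (fun k => x (sg k)). intros i j Hij Hl.
    assert (Hc : i < j \/ j < i) by lia. destruct Hc as [Hlt|Hlt].
    + apply (H (sg i) (sg j)); auto. apply sinc_lt; auto.
    + apply (Hsg2 j (sg i)). apply sinc_lt; auto. split; auto.
      apply H. apply sinc_lt; auto.
  - apply not_all_ex_not in HT. destruct HT as [i0 Hi0].
    assert (Hd : forall j, i0 <= j -> exists j', j < j' /\ strict P le (x j') (x j)).
    { intros j Hj. apply NNPP. intro Hc. apply Hi0. exists j. split; auto.
      intros j' Hj' Hs. apply Hc. eauto. }
    assert (forall y, Acc (strict P le) y -> forall j, i0 <= j -> x j = y -> False).
    { induction 1 as [y _ IH]. intros j Hj Ey. destruct (Hd j Hj) as [j' [Hj' Hs]].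
      apply (IH (x j')) with (j := j'). rewrite <- Ey; auto. lia. reflexivity. }
    apply (H0 (x i0) (Hwf _) i0); auto.
Qed.

Lemma wf_dlt : well_founded dlt.
Proof.
  intro D. apply NNPP. intro Hn. destruct (not_acc_chain dlt D Hn) as [s [_ Hs]].
  assert (Hx : forall i, exists x, s i x /\ ~ s (S i) x).
  { intro i. destruct (Hs i) as [[_ [_ H]] _]. exact H. }
  set (xs := fun i => proj1_sig (constructive_indefinite_description _ (Hx i))).
  assert (Hxs : forall i, s i (xs i) /\ ~ s (S i) (xs i)).
  { intro i. unfold xs. destruct (constructive_indefinite_description _ (Hx i)); auto. }
  assert (Hsub : forall d i y, s (d + i) y -> s i y).
  { induction d; intros i y Hy; auto. apply IHd. destruct (Hs (d + i)) as [[_ [H _]] _]. apply H. exact Hy. }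
  destruct (good_seq xs) as [i [j [Hij Hl]]].
  apply (proj2 (Hxs i)). destruct (Hs i) as [[Hd _] _]. apply (Hd _ _ Hl).
  apply (Hsub (j - S i)). replace (j - S i + S i) with j by lia. apply Hxs.
Qed.

Lemma dec_ideals E : downset E -> exists L : list (P -> Prop),
  (forall I, In I L -> ideal P le I /\ forall y, I y -> E y) /\ (forall x, E x -> exists I, In I L /\ I x).
Proof.
  induction E as [E IH] using (well_founded_induction wf_dlt). intro HE.
  destruct (classic (exists x, E x)) as [Hne|Hne].
  2:{ exists []. split. intros I []. intros x Hx; exfalso; eauto. }
  destruct (classic (forall a b, E a -> E b -> exists c, E c /\ le a c /\ le b c)) as [Hd|Hd].
  { exists [E]. split. intros I [<-|[]]. split; auto. split; auto.
    intros x Hx. exists E. split; auto. left; auto. }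
  apply not_all_ex_not in Hd. destruct Hd as [a Hd]. apply not_all_ex_not in Hd. destruct Hd as [b Hd].
  assert (Ea : E a) by (apply NNPP; intro; apply Hd; intros; contradiction).
  assert (Eb : E b) by (apply NNPP; intro; apply Hd; intros; contradiction).
  assert (Hnc : ~ exists c, E c /\ le a c /\ le b c) by (intro; apply Hd; auto).
  assert (Hdl : forall a, E a -> dlt (fun y => E y /\ ~ le a y) E).
  { intros a0 Ea0. split; [|split].
    - intros x y Hxy [Ey Hy]. split. apply (HE x y); auto. intro. apply Hy. eapply le_trans; eauto.
    - intros x [Hx _]; auto.
    - exists a0. split; auto. intros [_ H]. apply H. apply le_refl. }
  destruct (IH _ (Hdl a Ea) (proj1 (Hdl a Ea))) as [L1 [H1 H1']].
  destruct (IH _ (Hdl b Eb) (proj1 (Hdl b Eb))) as [L2 [H2 H2']].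
  exists (L1 ++ L2). split.
  - intros I HI. apply in_app_or in HI. destruct HI as [HI|HI].
    + destruct (H1 I HI) as [Hi Hy]. split; auto. intros y Iy; apply Hy; auto.
    + destruct (H2 I HI) as [Hi Hy]. split; auto. intros y Iy; apply Hy; auto.
  - intros x Ex. destruct (classic (le a x)) as [Ha|Ha].
    + destruct (classic (le b x)) as [Hb|Hb].
      * exfalso. apply Hnc. eauto.
      * destruct (H2' x (conj Ex Hb)) as [I [HI Ix]]. exists I. split; auto. apply in_or_app; auto.
    + destruct (H1' x (conj Ex Ha)) as [I [HI Ix]]. exists I. split; auto. apply in_or_app; auto.
Qed.

End Ord.


Definition glue k0 (A W : nat -> nat) := fun i => if i <? k0 then A i else W (i - k0).

Lemma glue_sinc k0 A W : sinc A -> sinc W -> sub W (shift k0 A) -> sinc (glue k0 A W).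
Proof.
  intros HA HW HWA i. unfold glue.
  destruct (i <? k0) eqn:E1; destruct (S i <? k0) eqn:E2;
    rewrite ?Nat.ltb_lt, ?Nat.ltb_ge in E1; rewrite ?Nat.ltb_lt, ?Nat.ltb_ge in E2.
  - apply HA.
  - replace (S i - k0) with 0 by lia. destruct (HWA 0) as [j Hj]. rewrite Hj. unfold shift.
    apply sinc_lt; auto; lia.
  - lia.
  - replace (S i - k0) with (S (i - k0)) by lia. apply HW.
Qed.

Lemma glue_sub k0 A W : sub W (shift k0 A) -> sub (glue k0 A W) A.
Proof.
  intros HWA i. unfold glue. destruct (i <? k0). exists i; auto.
  destruct (HWA (i - k0)) as [j Hj]. rewrite Hj. exists (k0 + j). reflexivity.
Qed.

Lemma glue_pre k0 A W : pre (glue k0 A W) k0 = pre A k0.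
Proof.
  unfold pre. apply map_ext_in. intros i Hi. apply in_seq in Hi. unfold glue.
  replace (i <? k0) with true; auto. symmetry; apply Nat.ltb_lt; lia.
Qed.

Lemma glue_shift k0 A W a : pre (shift k0 (glue k0 A W)) a = pre W a.
Proof.
  unfold pre. apply map_ext. intro i. unfold shift, glue.
  replace (k0 + i <? k0) with false. f_equal; lia. symmetry; apply Nat.ltb_ge; lia.
Qed.

Lemma pre_shift0 X a : pre (shift 0 X) a = pre X a.
Proof. reflexivity. Qed.

Section Main.
Variable P : Type.
Variable le : P -> P -> Prop.
Hypothesis Hpo : is_poset P le.
Hypothesis Hwqo : wqo P le.
Variable l : list (P -> Prop).
Hypothesis Hfin : forall I, ideal P le I -> ~ principal P le I -> exists J, In J l /\ forall x, I x <-> J x.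
Variable B : list nat -> Prop.
Hypothesis HB : barrier B.
Variable f : list nat -> P.

Definition Good (D : P -> Prop) := forall Z, sinc Z -> inU B Z ->
  (forall s, B s -> BZ Z s -> D (f s)) -> good_map le B f.

Lemma nwlist L : forall Z, sinc Z -> inU B Z ->
  (forall s, B s -> BZ Z s -> exists I, In I L /\ I (f s)) ->
  exists Z' I, sinc Z' /\ sub Z' Z /\ In I L /\ forall s, B s -> BZ Z' s -> I (f s).
Proof.
  induction L as [|I L IH]; intros Z HZ HU H.
  - destruct (key B HB Z HZ HU) as [k Hk]. destruct (H (pre Z k) Hk) as [I [[] _]].
    exists Z, k. repeat split; auto. apply sub_refl.
  - destruct (NW1 B HB (fun s => I (f s)) Z HZ HU) as [Z' [HZ' [HZZ [Hl|Hr]]]].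
    + exists Z', I. repeat split; auto. left; auto.
    + destruct (IH Z') as [Z'' [I'' [H1 [H2 [H3 H4]]]]]; auto.
      * eapply inU_sub; eauto.
      * intros s Bs Hs. destruct (H s Bs (BZ_sub Z Z' s HZZ Hs)) as [I0 [[<-|HI0] HI]].
        exfalso; apply (Hr s Bs Hs HI). eauto.
      * exists Z'', I''. repeat split; auto. eapply sub_trans; eauto. right; auto.
Qed.

Lemma ideal_ext I J : ideal P le I -> (forall x, I x <-> J x) -> ideal P le J.
Proof.
  intros [[x Hx] [H1 H2]] E. split; [exists x; apply E; auto|split].
  - intros a b Hab Jb. apply E. apply (H1 a b); auto. apply E; auto.
  - intros a b Ja Jb. destruct (H2 a b) as [c [Ic [Hac Hbc]]]; try apply E; auto.
    exists c. split; auto. apply E; auto.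
Qed.

Lemma irred D : ideal P le D -> forall l0 : list (P -> Prop), exists z, D z /\
  forall J, In J l0 -> ideal P le J -> (exists x, D x /\ ~ J x) -> ~ J z.
Proof.
  intros [[x0 Hx0] [Hdd Hdir]] l0. induction l0 as [|J l0 IH].
  - exists x0. split; [auto|intros J []].
  - destruct IH as [z [Dz Hz]].
    destruct (classic (ideal P le J /\ exists x, D x /\ ~ J x)) as [[HJ [x [Dx nJx]]]|Hn].
    + destruct (Hdir z x Dz Dx) as [u [Du [Hzu Hxu]]]. exists u. split; auto.
      intros J0 [<-|HJ0] HJ0i Hex Ju.
      * apply nJx. apply (proj1 (proj2 HJ) x u); auto.
      * apply (Hz J0 HJ0 HJ0i Hex). apply (proj1 (proj2 HJ0i) z u); auto.
    + exists z. split; auto. intros J0 [<-|HJ0] HJ0i Hex.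
      * exfalso; apply Hn; auto.
      * apply Hz; auto.
Qed.

Definition Kset (D : P -> Prop) := fun y => exists J, In J l /\ ideal P le J /\
   (forall x, J x -> D x) /\ (exists x, D x /\ ~ J x) /\ J y.

Lemma psi D : ideal P le D -> forall z, D z -> exists w, D w /\
  forall y, D y -> ~ le z y -> Kset D y \/ le y w.
Proof.
  intros HD z Dz. set (E := fun y => D y /\ ~ le z y).
  assert (HE : downset P le E).
  { intros x y Hxy [Dy Hy]. split. apply (proj1 (proj2 HD) x y); auto.
    intro. apply Hy. eapply (le_trans P le Hpo); eauto. }
  destruct (dec_ideals P le Hpo Hwqo E HE) as [L [HL1 HL2]].
  assert (Hcov : forall L0, (forall I, In I L0 -> ideal P le I /\ forall y, I y -> E y) ->
     exists w, D w /\ forall I, In I L0 -> forall y, I y -> Kset D y \/ le y w).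
  { induction L0 as [|I L0 IH]; intros HL0.
    - exists z. split; auto. intros I [].
    - destruct IH as [w [Dw Hw]]. intros; apply HL0; right; auto.
      destruct (HL0 I (or_introl eq_refl)) as [HI HIE].
      destruct (classic (principal P le I)) as [[m [Im Hm]]|Hnp].
      + destruct (HIE m Im) as [Dm _].
        destruct (proj2 (proj2 HD) w m Dw Dm) as [c [Dc [Hwc Hmc]]].
        exists c. split; auto. intros I0 [<-|HI0] y Iy.
        * right. eapply (le_trans P le Hpo); eauto.
        * destruct (Hw I0 HI0 y Iy) as [Hk|Hk]; auto. right. eapply (le_trans P le Hpo); eauto.
      + destruct (Hfin I HI Hnp) as [J [HJl HJ]].
        exists w. split; auto. intros I0 [<-|HI0] y Iy.
        * left. exists J. split; auto. split. eapply ideal_ext; eauto. split; [|split].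
          -- intros x Jx. exact (proj1 (HIE x (proj2 (HJ x) Jx))).
          -- exists z. split; auto. intro Jz. apply (proj2 (HIE z (proj2 (HJ z) Jz))). apply (le_refl P le Hpo); auto.
          -- apply HJ; auto.
        * apply (Hw I0 HI0 y Iy). }
  destruct (Hcov L HL1) as [w [Dw Hw]]. exists w. split; auto.
  intros y Dy Hzy. destruct (HL2 y (conj Dy Hzy)) as [I [HI Iy]]. apply (Hw I HI y Iy).
Qed.

Lemma main D : downset P le D -> Good D.
Proof.
  induction D as [D IH] using (well_founded_induction (wf_dlt P le Hwqo)).
  intros HD Z HZ HU HZD. apply NNPP. intro Hbad.
  assert (reduce : forall Z' D', sinc Z' -> sub Z' Z -> dlt P le D' D ->
            (forall s, B s -> BZ Z' s -> D' (f s)) -> False).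
  { intros Z' D' H1 H2 H3 H4. apply Hbad. apply (IH D' H3 (proj1 H3) Z' H1); auto. eapply inU_sub; eauto. }
  destruct (dec_ideals P le Hpo Hwqo D HD) as [L [HL1 HL2]].
  destruct (nwlist L Z HZ HU) as [Z1 [I [HZ1 [HZ1Z [HIL HI]]]]].
  { intros s Bs Hs. apply HL2. apply HZD; auto. }
  destruct (HL1 I HIL) as [HIid HID].
  assert (HDI : forall x, D x -> I x).
  { intros x Dx. apply NNPP; intro nIx. apply (reduce Z1 I); auto.
    split; [exact (proj1 (proj2 HIid))|split; auto]. eauto. }
  assert (Did : ideal P le D). { apply (ideal_ext I); auto. intro x; split; auto. }
  assert (HU1 : inU B Z1) by (eapply inU_sub; eauto).
  assert (HZD1 : forall Z', sub Z' Z1 -> forall s, B s -> BZ Z' s -> D (f s)).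
  { intros Z' HZ' s Bs Hs. apply HZD; auto. apply (BZ_sub Z Z'); auto. eapply sub_trans; eauto. }
  destruct (classic (principal P le D)) as [[m [Dm Hm]]|Hnp].
  - destruct (NW1 B HB (fun s => f s = m) Z1 HZ1 HU1) as [Z2 [HZ2 [HZ21 [Hl|Hr]]]].
    + destruct (pair_ex B HB Z2 HZ2 (inU_sub B _ _ HU1 HZ21)) as [s [t [Bs [Bt [Hs [Ht Hst]]]]]].
      apply Hbad. exists s, t. repeat split; auto. rewrite (Hl s Bs Hs), (Hl t Bt Ht). apply (le_refl P le Hpo).
    + apply (reduce Z2 (fun x => D x /\ x <> m)); auto. eapply sub_trans; eauto.
      * split; [|split].
        -- intros x y Hxy [Dy Hy]. split. apply (HD x y); auto. intro; subst. apply Hy.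
           apply (le_anti P le Hpo); auto.
        -- intros x [Dx _]; auto.
        -- exists m. split; auto. intros [_ H]; auto.
      * intros s Bs Hs. split. apply (HZD1 Z2); auto. apply (Hr s Bs Hs).
  - destruct (irred D Did l) as [z0 [Dz0 Hz0]].
    assert (HKd : dlt P le (Kset D) D).
    { split; [|split].
      - intros x y Hxy [J [HJl [HJ [HJD [Hex Jy]]]]]. exists J.
        split; [auto|split; [auto|split; [auto|split; [auto|]]]].
        apply (proj1 (proj2 HJ) x y); auto.
      - intros x [J [_ [_ [HJD [_ Jx]]]]]. auto.
      - exists z0. split; auto. intros [J [HJl [HJ [HJD [Hex Jz]]]]]. apply (Hz0 J HJl HJ Hex Jz). }
    destruct (NW1 B HB (fun s => Kset D (f s)) Z1 HZ1 HU1) as [Z2 [HZ2 [HZ21 [Hl|HK2]]]].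
    { apply (reduce Z2 (Kset D)); auto. eapply sub_trans; eauto. }
    assert (HU2 : inU B Z2) by (eapply inU_sub; eauto).
    destruct (key B HB Z2 HZ2 HU2) as [k0 Hk0].
    set (Z3 := shift k0 Z2).
    set (V := fun W => glue k0 Z2 W).
    assert (HV : forall W, sinc W -> sub W Z3 -> sinc (V W) /\ sub (V W) Z2).
    { intros W HW HW3. split. apply glue_sinc; auto. apply glue_sub; auto. }
    assert (HBZ2 : forall W j a, sinc W -> sub W Z3 -> BZ Z2 (pre (shift j (V W)) a)).
    { intros W j a HW HW3. destruct (HV W HW HW3) as [H1 H2]. exists (shift j (V W)), a.
      repeat split; auto. apply sinc_shift; auto. eapply sub_trans; eauto. apply sub_shift. }
    assert (Hclaim : forall j, exists w, D w /\ forall W, sinc W -> sub W Z3 -> forall a,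
              B (pre (shift j (V W)) a) -> le (f (pre (shift j (V W)) a)) w).
    { induction j.
      - exists (f (pre Z2 k0)). split.
        + apply (HZD1 Z2 HZ21); auto. exists Z2, k0. split; [auto|split; [apply sub_refl|reflexivity]].
        + intros W HW HW3 a Ha. rewrite pre_shift0 in *.
          assert (E : pre (V W) k0 = pre Z2 k0) by apply glue_pre.
          assert (a = k0). { apply (uniq_pre B HB (V W)); auto. rewrite E; auto. }
          subst. rewrite E. apply (le_refl P le Hpo).
      - destruct IHj as [w [Dw Hw]]. destruct (psi D Did w Dw) as [w' [Dw' Hw']].
        exists w'. split; auto. intros W HW HW3 a' Ha'.
        destruct (HV W HW HW3) as [HV1 HV2].
        assert (HX : sinc (shift j (V W))) by (apply sinc_shift; auto).
        assert (HXU : inU B (shift j (V W))).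
        { eapply inU_sub. exact HU2. eapply sub_trans. apply sub_shift. auto. }
        destruct (key B HB _ HX HXU) as [a Ha].
        assert (Ha2 : B (pre (shift 1 (shift j (V W))) a')) by (rewrite pre_shift_shift; auto).
        pose proof (step_rel B HB _ a a' HX Ha Ha2) as Hst. rewrite pre_shift_shift in Hst.
        set (y := f (pre (shift (S j) (V W)) a')).
        assert (Dy : D y). { apply (HZD1 Z2 HZ21); auto. }
        assert (nK : ~ Kset D y). { apply HK2; auto. }
        assert (nwy : ~ le w y).
        { intro Hwy. apply Hbad. exists (pre (shift j (V W)) a), (pre (shift (S j) (V W)) a').
          repeat split; auto. eapply (le_trans P le Hpo). apply Hw; auto. exact Hwy. }
        destruct (Hw' y Dy nwy) as [Hk|Hk]; [contradiction|exact Hk]. }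
    destruct (Hclaim k0) as [ws [Dws Hws]].
    apply (reduce Z3 (fun y => D y /\ le y ws)).
    + apply sinc_shift; auto.
    + eapply sub_trans. apply sub_shift. eapply sub_trans; eauto.
    + split; [|split].
      * intros x y Hxy [Dy Hy]. split. apply (HD x y); auto. eapply (le_trans P le Hpo); eauto.
      * intros x [Dx _]; auto.
      * apply NNPP. intro Hn. apply Hnp. exists ws. split; auto.
        intros x Dx. apply NNPP. intro. apply Hn. exists x. split; auto. intros [_ H']; auto.
    + intros s Bs [W [k [HW [HW3 ->]]]]. split.
      * apply (HZD1 Z3). eapply sub_trans. apply sub_shift. exact HZ21. auto. exists W, k. auto.
      * pose proof (Hws W HW HW3 k) as H'. unfold V in H'. rewrite glue_shift in H'. apply H'; auto.
Qed.

End Main.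


Fixpoint allsorted (a n : nat) : list (list nat) :=
  match n with
  | 0 => [[]]
  | S n => map (cons a) (allsorted (S a) n) ++ allsorted (S a) n
  end.

Lemma allsorted_in n : forall a s, StronglySorted lt s -> (forall x, In x s -> a <= x < a + n) ->
  In s (allsorted a n).
Proof.
  induction n; intros a s Hs Hx.
  - destruct s as [|x s]. left; auto. specialize (Hx x (or_introl eq_refl)). lia.
  - simpl. apply in_or_app. destruct s as [|x s].
    + right. apply IHn. constructor. intros _ [].
    + inversion Hs as [|? ? Hs' Hf]; subst. rewrite Forall_forall in Hf.
      destruct (Nat.eq_dec x a).
      * subst. left. apply in_map. apply IHn; auto. intros y Hy.
        specialize (Hf y Hy). specialize (Hx y (or_intror Hy)). lia.
      * right. apply IHn; auto. pose proof (Hx x (or_introl eq_refl)) as Hxa. intros y Hy. specialize (Hx y Hy).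
        destruct Hy as [<-|Hy]; [lia|]. specialize (Hf y Hy). lia.
Qed.

Lemma U_inf B : barrier B -> forall n, exists m, n <= m /\ U B m.
Proof.
  intros HB n. apply NNPP. intro Hn. destruct HB as [Hfs [Hinf _]]. apply Hinf.
  exists (allsorted 0 n). intros s Bs. apply allsorted_in.
  - apply ss_of. apply Hfs; auto.
  - intros x Hx. split; [lia|]. destruct (le_lt_dec n x); [|simpl; lia].
    exfalso. apply Hn. exists x. split; auto. exists s; auto.
Qed.

Theorem corollary1p3 (P : Type) (le : P -> P -> Prop) :
  is_poset P le ->
  wqo P le ->
  finitely_many_nonprincipal_ideals P le ->
  bqo le.
Proof.
  intros Hpo Hwqo [l Hl] A ltA _ B HB _ f.
  destruct (subseq_choice (U B) (U_inf B HB)) as [Z [HZ HU]].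
  apply (main P le Hpo Hwqo l Hl B HB f (fun _ => True)) with (Z := Z); auto.
  intros x y _ _; exact I.
Qed.
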